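(* In Setup A, let $f_1<f_2<\dots<f_s$ be the distinct values of $\{f(\tau'^* ):\tau'\in\mathcal{O}\}$ and for each $1\le u\le s$ choose $\tau_u\in\mathcal{O}$ with $f(\tau_u^* )=f_u$. For $\tau\in\mathcal{O}$ and $0\le i\le l-1$ let $H_{\tau,i}:M_{p^i\tau}\to M_{p^{i+1}\tau}$ be $F$ if $f(p^i\tau^* )\ge f(\tau^* )$ and $F+V'$ if $f(p^i\tau^* )<f(\tau^* )$. Fix $1\le u\le s$ and assume that for every $1\le j\le u$, $$\dim\big(\pi_{\tau_j}\circ H_{\tau_j,l-1}\circ\cdots\circ H_{\tau_j,0}(M_{\tau_j})\big)=f_j.$$ Then $w_\tau$ is maximal for every $\tau\in\mathcal{O}$ with $f(\tau^* )\le f_u$.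
   Context: Setup A. Let $k_0=\overline{\mathbb{F}}_p$ with Frobenius $\sigma$. Let $\mathcal{O}$ be a finite set of size $l$ with a cyclic permutation $\tau'\mapsto p\tau'$ (so $\mathcal{O}=\{\tau,p\tau,\dots,p^{l-1}\tau\}$ and $p^l\tau=\tau$). Fix an integer $g\ge1$ and, for each $\tau'\in\mathcal{O}$, non-negative integers $f(\tau')$, $f(\tau'^* )$ with $f(\tau')+f(\tau'^* )=g$ (the notation $f(p^i\tau^* )$ means $f((p^i\tau)^* )$). Let $M=\bigoplus_{\tau'\in\mathcal{O}}M_{\tau'}$ where $M_{\tau'}$ has $k_0$-basis $e_{\tau',1},\dots,e_{\tau',g}$; write $M_{\tau',k}=\mathrm{Span}(e_{\tau',1},\dots,e_{\tau',k})$. For each $\tau'$ fix increasing sequences $j_{\tau',1}<\dots<j_{\tau',f(\tau')}$ and $i_{\tau',1}<\dots<i_{\tau',f(\tau'^* )}$ partitioning $\{1,\dots,g\}$, and let $w_{\tau'}\in\mathrm{Sym}_g$ be given by $w_{\tau'}(j_{\tau',k})=k$, $w_{\tau'}(i_{\tau',k})=f(\tau')+k$. Let $F:M\to M$ be the $\sigma$-semilinear map with $F(e_{\tau',j})=e_{p\tau',\,w_{\tau'}(j)-f(\tau')}$ if $w_{\tau'}(j)>f(\tau')$ and $F(e_{\tau',j})=0$ otherwise. Let $V':M\to M$ be the semilinear map with $V'(e_{\tau',j})=e_{p\tau',\,f(\tau'^* )+w_{\tau'}(j)}$ if $w_{\tau'}(j)\le f(\tau')$ and $V'(e_{\tau',j})=0$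 otherwise. Let $Q_{\tau'}=\mathrm{Span}(e_{\tau',i_{\tau',k}})$, $Q^\vee_{\tau'^*}=\mathrm{Span}(e_{\tau',j_{\tau',k}})$, and $\pi_{\tau'}:M_{\tau'}\to Q_{\tau'}$ the projection with kernel $Q^\vee_{\tau'^*}$. We say $w_{\tau'}$ is maximal if $i_{\tau',k}=k$ for all $1\le k\le f(\tau'^* )$, i.e. $w_{\tau'}(k)=f(\tau')+k$ for $k\le f(\tau'^* )$ and $w_{\tau'}(k)=k-f(\tau'^* )$ for $k>f(\tau'^* )$ (equivalently $\ker F\cap M_{\tau',f(\tau'^* )}=0$; this is the permutation of maximal length). *)

(* Defs.v *)
From HB Require Import structures.
From mathcomp Require Import all_boot all_order all_algebra.
Set Implicit Arguments. Unset Strict Implicit. Unset Printing Implicit Defensive.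
Import Order.TTheory GRing.Theory Num.Theory.
Local Open Scope ring_scope.

(* The orbit O = {tau, p tau, ..., p^(l-1) tau} is modelled as 'I_l, with the
   cyclic permutation tau' |-> p tau' being ordS (i |-> i+1 mod l).
   Basis indices 1..g are modelled 0-based as 'I_g.
   For each tau' : 'I_l, js tau' = [j_1 < ... < j_f(tau')] and
   is_ tau' = [i_1 < ... < i_f(tau'^* )] (both 0-based).                     *)

Definition pmul {l : nat} (t : 'I_l) : 'I_l := ordS t.
Definition ppow {l : nat} (i : nat) (t : 'I_l) : 'I_l := iter i (@pmul l) t.

Definition fO {l g : nat} (js : 'I_l -> seq 'I_g) (t : 'I_l) : nat := size (js t).
Definition fOstar {l g : nat} (is_ : 'I_l -> seq 'I_g) (t : 'I_l) : nat := size (is_ t).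

(* w_tau' (0-based): w(j_k) = k, w(i_k) = f(tau') + k *)
Definition wperm {l g : nat} (js is_ : 'I_l -> seq 'I_g) (t : 'I_l) (j : 'I_g) : nat :=
  index j (js t ++ is_ t).

Definition ebasis {K : fieldType} {g : nat} (k : 'I_g) : 'rV[K]_g := delta_mx 0 k.

Definition ebasis_nat {K : fieldType} {g : nat} (n : nat) : 'rV[K]_g :=
  if insub n is Some k then ebasis k else 0.

Definition Fimg {K : fieldType} {l g : nat} (js is_ : 'I_l -> seq 'I_g)
    (t : 'I_l) (j : 'I_g) : 'rV[K]_g :=
  if (fO js t <= wperm js is_ t j)%N then ebasis_nat ((wperm js is_ t j - fO js t)%N) else 0.

Definition Vimg {K : fieldType} {l g : nat} (js is_ : 'I_l -> seq 'I_g)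
    (t : 'I_l) (j : 'I_g) : 'rV[K]_g :=
  if (wperm js is_ t j < fO js t)%N then ebasis_nat (fOstar is_ t + wperm js is_ t j)%N else 0.

(* sigma-semilinear extension (sigma = Frobenius x |-> x^p) of a map on basis vectors *)
Definition semilin {K : fieldType} {g : nat} (p : nat) (img : 'I_g -> 'rV[K]_g)
    (v : 'rV[K]_g) : 'rV[K]_g :=
  \sum_(j < g) ((v 0 j) ^+ p) *: img j.

Definition Fmap {K : fieldType} {l g : nat} (p : nat) (js is_ : 'I_l -> seq 'I_g)
    (t : 'I_l) : 'rV[K]_g -> 'rV[K]_g := semilin p (Fimg js is_ t).
Definition Vmap {K : fieldType} {l g : nat} (p : nat) (js is_ : 'I_l -> seq 'I_g)
    (t : 'I_l) : 'rV[K]_g -> 'rV[K]_g := semilin p (Vimg js is_ t).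

Definition Hmap {K : fieldType} {l g : nat} (p : nat) (js is_ : 'I_l -> seq 'I_g)
    (t : 'I_l) (i : nat) (v : 'rV[K]_g) : 'rV[K]_g :=
  let ti := ppow i t in
  if (fOstar is_ t <= fOstar is_ ti)%N then Fmap p js is_ ti v
  else Fmap p js is_ ti v + Vmap p js is_ ti v.

Fixpoint Hcomp {K : fieldType} {l g : nat} (p : nat) (js is_ : 'I_l -> seq 'I_g)
    (t : 'I_l) (m : nat) (v : 'rV[K]_g) : 'rV[K]_g :=
  match m with
  | 0 => v
  | m'.+1 => Hmap p js is_ t m' (Hcomp p js is_ t m' v)
  end.

(* pi_tau' : M_tau' -> Q_tau' with kernel Q^vee_{tau'^*} *)
Definition piproj {K : fieldType} {l g : nat} (is_ : 'I_l -> seq 'I_g)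
    (t : 'I_l) (v : 'rV[K]_g) : 'rV[K]_g :=
  \row_k (if k \in is_ t then v 0 k else 0).

Definition wmaximal {l g : nat} (is_ : 'I_l -> seq 'I_g) (t : 'I_l) : Prop :=
  [seq val x | x <- is_ t] = iota 0 (fOstar is_ t).

Definition has_dim {K : fieldType} {g : nat} (S : 'rV[K]_g -> Prop) (d : nat) : Prop :=
  exists U : 'M[K]_g, (forall v, (v <= U)%MS <-> S v) /\ \rank U = d.

(* Main.v *)
Require Import Defs.
From HB Require Import structures.
From mathcomp Require Import all_boot all_order all_algebra.
From mathcomp Require Import zify.
Set Implicit Arguments. Unset Strict Implicit. Unset Printing Implicit Defensive.
Import Order.TTheory GRing.Theory Num.Theory.

Lemma nth_gap (s : seq nat) : sorted ltn s ->
  forall i d, (i + d < size s)%N -> (nth 0 s i + d <= nth 0 s (i + d))%N.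
Proof.
move=> ss i; elim=> [|d IH] H; first by rewrite !addn0.
have H1 : (i + d < size s)%N by lia.
have := IH H1.
have h2 := @sorted_ltn_nth _ ltn ltn_trans 0 s ss (i + d) (i + d).+1.
rewrite !inE H1 -addnS H in h2.
have := h2 isT isT; rewrite addnS ltnSn => /(_ isT) h3 h4.
have h5 : (nth 0 s (i+d) < nth 0 s (i+d).+1)%N := h3.
rewrite addnS; lia.
Qed.

Arguments nth_gap {s}.

Lemma sorted_iota (s : seq nat) : sorted ltn s ->
  (forall x, x \in s -> (x < size s)%N) -> s = iota 0 (size s).
Proof.
move=> ss hx; apply: (@eq_from_nth _ 0); first by rewrite size_iota.
move=> i hi; rewrite nth_iota // add0n.
have h1 := nth_gap ss 0 i; rewrite add0n in h1; have := h1 hi.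
have := nth_gap ss i ((size s - 1) - i).
have -> : (i + ((size s - 1) - i) = (size s - 1))%N by lia.
have hl : ((size s - 1) < size s)%N by lia.
move=> /(_ hl) h2 h3.
have h4 : (nth 0 s (size s - 1) < size s)%N := hx _ (mem_nth 0 hl). lia.
Qed.

Lemma idx_le g (s : seq 'I_g) (a : nat) (j : 'I_g) :
  sorted (fun a b : 'I_g => (a < b)%N) s -> (forall x, x \in s -> (a <= x)%N) ->
  j \in s -> (a + index j s <= j)%N.
Proof.
move=> ss ha js.
have ss' : sorted ltn (map val s) by rewrite sorted_map.
have hi : (0 + index j s < size (map val s))%N by rewrite size_map add0n index_mem.
have := nth_gap ss' 0 (index j s) hi; rewrite add0n.
have s0 : (0 < size s)%N by move: js; case: (s).
have e1 : nth 0 (map val s) (index j s) = val j.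
  by rewrite (nth_map j) ?index_mem ?nth_index.
have e2 : nth 0 (map val s) 0 = val (nth j s 0) by rewrite (nth_map j).
rewrite e1 e2.
have h4 : (a <= nth j s 0)%N := ha _ (mem_nth j s0).
move=> h5; have h6 : (nth j s 0 + index j s <= j)%N := h5. lia.
Qed.
Section Supp.
Local Open Scope ring_scope.
Variables (K : fieldType) (g : nat).

Definition supp (P : pred nat) (v : 'rV[K]_g) := forall j : 'I_g, ~~ P j -> v 0 j = 0.

Lemma supp0 (P : pred nat) : supp P 0.
Proof. by move=> j _; rewrite mxE. Qed.

Lemma suppD (P : pred nat) u v : supp P u -> supp P v -> supp P (u + v).
Proof. by move=> hu hv j hj; rewrite mxE hu // hv // addr0. Qed.

Lemma supp_ebasis (P : pred nat) n : P n -> supp P (ebasis_nat n).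
Proof.
move=> Pn j hj; rewrite /ebasis_nat; case: insubP => [k _ hk|_]; last by rewrite mxE.
rewrite /ebasis mxE eqxx /=; case: eqP => // ekj.
by move: hj; rewrite ekj; have -> : nat_of_ord k = n := hk; rewrite Pn.
Qed.

Lemma supp_semilin p (img : 'I_g -> 'rV[K]_g) (P Q : pred nat) v :
  (0 < p)%N -> supp P v -> (forall j : 'I_g, P j -> supp Q (img j)) ->
  supp Q (semilin p img v).
Proof.
move=> hp hv himg j' hj'; rewrite /semilin summxE big1 // => j _.
rewrite mxE; case: (boolP (P j)) => Pj; first by rewrite (himg j Pj j' hj') mulr0.
by rewrite (hv j Pj) expr0n eqn0Ngt hp mul0r.
Qed.
End Supp.

Section W.
Local Open Scope ring_scope.
Variables (K : fieldType) (l g p : nat) (js is_ : 'I_l -> seq 'I_g).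
Hypothesis hp : (0 < p)%N.
Hypothesis hjs : forall t, sorted (fun a b : 'I_g => (a < b)%N) (js t).
Hypothesis his : forall t, sorted (fun a b : 'I_g => (a < b)%N) (is_ t).
Hypothesis hpart : forall t, perm_eq (js t ++ is_ t) (enum 'I_g).

Lemma mem_js_is t j : (j \in js t) || (j \in is_ t).
Proof. by rewrite -mem_cat (perm_mem (hpart t)) mem_enum. Qed.

Lemma notin_js t j : j \in is_ t -> j \notin js t.
Proof.
move=> ji; have := perm_uniq (hpart t); rewrite enum_uniq cat_uniq.
case/and3P=> _ /hasPn H _; exact: H.
Qed.

Lemma wperm_is t j : j \in is_ t -> wperm js is_ t j = (fO js t + index j (is_ t))%N.
Proof. by move=> ji; rewrite /wperm index_cat (negbTE (notin_js ji)). Qed.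

Lemma wperm_js t j : j \in js t -> wperm js is_ t j = index j (js t).
Proof. by move=> jj; rewrite /wperm index_cat jj. Qed.

Lemma Fimg_is t j : j \in is_ t -> Fimg (K:=K) js is_ t j = ebasis_nat (index j (is_ t)).
Proof. by move=> ji; rewrite /Fimg wperm_is // leq_addr addKn. Qed.

Lemma Vimg_is t j : j \in is_ t -> Vimg (K:=K) js is_ t j = 0.
Proof. by move=> ji; rewrite /Vimg wperm_is // ltnNge leq_addr. Qed.

Lemma Fimg_js t j : j \in js t -> Fimg (K:=K) js is_ t j = 0.
Proof. by move=> jj; rewrite /Fimg wperm_js // /fO leqNgt index_mem jj. Qed.

Lemma Vimg_js t j : j \in js t ->
  Vimg (K:=K) js is_ t j = ebasis_nat (fOstar is_ t + index j (js t))%N.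
Proof. by move=> jj; rewrite /Vimg wperm_js // /fO index_mem jj. Qed.

Lemma max_js t j : wmaximal is_ t -> j \in js t -> (fOstar is_ t <= j)%N.
Proof.
move=> hm jj; rewrite leqNgt; apply/negP => hlt.
have : val j \in [seq val x | x <- is_ t] by rewrite hm mem_iota.
rewrite (mem_map val_inj) => ji.
by move: (notin_js ji); rewrite jj.
Qed.

Lemma nonmax_all t : ~ wmaximal is_ t ->
  ~ (forall x, x \in [seq val x | x <- is_ t] -> (x < fOstar is_ t)%N).
Proof.
move=> hn hall; apply: hn; rewrite /wmaximal.
have -> : fOstar is_ t = size [seq val x | x <- is_ t] by rewrite size_map.
apply: sorted_iota; first by rewrite sorted_map; exact: his.
by move=> x hx; rewrite size_map; exact: hall.
Qed.

Lemma nonmax_idx t j : ~ wmaximal is_ t -> j \in is_ t -> (j < fOstar is_ t)%N ->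
  (index j (is_ t) < (fOstar is_ t).-1)%N.
Proof.
move=> hn ji jlt.
have hm : (index j (is_ t) < fOstar is_ t)%N by rewrite /fOstar index_mem.
rewrite ltnNge; apply/negP => hge; apply: (nonmax_all hn) => x.
set s := [seq val x | x <- is_ t].
have ss : sorted ltn s by rewrite sorted_map; exact: his.
move=> xs; set i := index x s.
have hi : (i < fOstar is_ t)%N by rewrite /i /fOstar -(size_map val) index_mem.
have ej : nth 0%N s (index j (is_ t)) = j by rewrite (nth_map j) // nth_index.
have ei : nth 0%N s i = x by rewrite nth_index.
have := nth_gap ss i (index j (is_ t) - i).
have e : (i + (index j (is_ t) - i) = index j (is_ t))%N by lia.
rewrite e ej ei size_map => /(_ hm) h. lia.
Qed.

Definition lt_ (k : nat) : pred nat := fun n => (n < k)%N.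

Lemma C0 t v : supp (lt_ (fOstar is_ t)) (Fmap (K:=K) p js is_ t v).
Proof.
rewrite /Fmap; apply: (@supp_semilin _ _ _ _ predT) => // j _.
case/orP: (mem_js_is t j) => h; first by rewrite Fimg_js //; exact: supp0.
by rewrite Fimg_is //; apply: supp_ebasis; rewrite /lt_ /fOstar index_mem.
Qed.

Lemma C1 k t v : supp (lt_ k) v -> supp (lt_ k) (Fmap (K:=K) p js is_ t v).
Proof.
move=> hv; rewrite /Fmap; apply: (@supp_semilin _ _ _ _ (lt_ k)) => // j hj.
case/orP: (mem_js_is t j) => h; first by rewrite Fimg_js //; exact: supp0.
rewrite Fimg_is //; apply: supp_ebasis.
have := @idx_le _ (is_ t) 0 j (his t) (fun _ _ => leq0n _) h.
move: hj; rewrite /lt_ add0n; lia.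
Qed.

Lemma C2 k t v : wmaximal is_ t -> supp (lt_ k) v ->
  supp (lt_ k) (Fmap (K:=K) p js is_ t v + Vmap p js is_ t v).
Proof.
move=> hm hv; apply: suppD; first exact: C1.
rewrite /Vmap; apply: (@supp_semilin _ _ _ _ (lt_ k)) => // j hj.
case/orP: (mem_js_is t j) => h; last by rewrite Vimg_is //; exact: supp0.
rewrite Vimg_js //; apply: supp_ebasis.
have := @idx_le _ (js t) (fOstar is_ t) j (hjs t) (fun x hx => max_js hm hx) h.
move: hj; rewrite /lt_; lia.
Qed.

Lemma C3 t v : ~ wmaximal is_ t -> supp (lt_ (fOstar is_ t)) v ->
  supp (lt_ (fOstar is_ t).-1) (Fmap (K:=K) p js is_ t v).
Proof.
move=> hn hv; rewrite /Fmap.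
apply: (@supp_semilin _ _ _ _ (lt_ (fOstar is_ t))) => // j hj.
case/orP: (mem_js_is t j) => h; first by rewrite Fimg_js //; exact: supp0.
rewrite Fimg_is //; apply: supp_ebasis; exact: nonmax_idx.
Qed.
End W.

Local Open Scope ring_scope.
Lemma dim_le (K : fieldType) g (S : 'rV[K]_g -> Prop) d (s : seq nat) :
  has_dim S d -> (forall v, S v -> supp (fun n => n \in s) v) -> (d <= size s)%N.
Proof.
case=> U [hU <-] hs.
pose A := [pred k : 'I_g | val k \in s].
pose W : 'M[K]_(#|A|, g) := \matrix_(i, j) ((enum_val i == j)%:R).
have sub : forall v, supp (fun n => n \in s) v -> (v <= W)%MS.
  move=> v hv; rewrite [v]row_sum_delta; apply: summx_sub => k _.
  case: (boolP (val k \in s)) => hk.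
    apply: scalemx_sub.
    have kA : k \in A by [].
    have -> : delta_mx 0 k = row (enum_rank_in kA k) W.
      by apply/rowP => j; rewrite !mxE enum_rankK_in // eqxx eq_sym.
    exact: row_sub.
  by rewrite (hv k hk) scale0r sub0mx.
have UW : (U <= W)%MS.
  by apply/row_subP => i; apply: sub; apply: hs; apply: (hU _).1; exact: row_sub.
apply: leq_trans (mxrankS UW) _; apply: leq_trans (rank_leq_row W) _.
rewrite cardE -(size_map val); apply: uniq_leq_size.
  by rewrite (map_inj_uniq val_inj) enum_uniq.
by move=> x /mapP [y]; rewrite mem_enum => hy ->.
Qed.

Lemma ppow_val l (hl : (0 < l)%N) i (t : 'I_l) : val (ppow i t) = ((t + i) %% l)%N.
Proof.
elim: i => [|i IH]; first by rewrite addn0 modn_small.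
rewrite /ppow iterS -/(ppow i t) /pmul /= IH.
by rewrite -addn1 modnDml -addnA addn1 addnS.
Qed.

Lemma orbit l (hl : (0 < l)%N) (tau t : 'I_l) : exists2 i, (i < l)%N & ppow i tau = t.
Proof.
exists ((t + (l - tau)) %% l)%N; first by rewrite ltn_mod.
apply: val_inj; rewrite ppow_val // modnDmr.
have -> : (tau + (t + (l - tau)) = t + l)%N by have := ltn_ord tau; lia.
by rewrite modnDr modn_small.
Qed.

Lemma supp_piproj (K : fieldType) l g (is_ : 'I_l -> seq 'I_g) t (P : pred nat) (v : 'rV[K]_g) :
  supp P v -> supp P (piproj is_ t v).
Proof. by move=> hv j hj; rewrite mxE; case: ifP => // _; exact: hv. Qed.

Section Chain.
Variables (K : fieldType) (l g p : nat) (js is_ : 'I_l -> seq 'I_g).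
Hypothesis hp : (0 < p)%N.
Hypothesis hjs : forall t, sorted (fun a b : 'I_g => (a < b)%N) (js t).
Hypothesis his : forall t, sorted (fun a b : 'I_g => (a < b)%N) (is_ t).
Hypothesis hpart : forall t, perm_eq (js t ++ is_ t) (enum 'I_g).
Variable tau : 'I_l.
Hypothesis IH : forall t, (fOstar is_ t < fOstar is_ tau)%N -> wmaximal is_ t.

Lemma step k m (x : 'rV[K]_g) : supp (lt_ k) (Hcomp p js is_ tau m x) ->
  supp (lt_ k) (Hcomp p js is_ tau m.+1 x).
Proof.
move=> h /=; rewrite /Hmap; case: ifP => hle; first exact: C1.
apply: C2 => //; apply: IH; by rewrite ltnNge hle.
Qed.

Lemma chain1 m (x : 'rV[K]_g) : (0 < m)%N -> supp (lt_ (fOstar is_ tau)) (Hcomp p js is_ tau m x).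
Proof.
case: m => // m _; elim: m => [|m IHm]; last exact: step.
rewrite /= /Hmap /ppow /= leqnn; exact: C0.
Qed.

Lemma chainlater k m n (x : 'rV[K]_g) : supp (lt_ k) (Hcomp p js is_ tau m x) ->
  supp (lt_ k) (Hcomp p js is_ tau (m + n) x).
Proof. move=> h; elim: n => [|n IHn]; [by rewrite addn0 | rewrite addnS; exact: step]. Qed.
End Chain.

Unset Implicit Arguments.
Theorem theorem4p6
  (K : closedFieldType) (p : nat) (hp : prime p) (hchar : p \in [pchar K])
  (halg : forall x : K, exists n : nat, (0 < n)%N /\ x ^+ (p ^ n) = x)
  (l g : nat) (hl : (0 < l)%N) (hg : (1 <= g)%N)
  (js is_ : 'I_l -> seq 'I_g)
  (hjs : forall t, sorted (fun a b : 'I_g => (a < b)%N) (js t))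
  (his : forall t, sorted (fun a b : 'I_g => (a < b)%N) (is_ t))
  (hpart : forall t, perm_eq (js t ++ is_ t) (enum 'I_g))
  (rep : nat -> 'I_l)
  (hrep : forall t, fOstar is_ (rep (fOstar is_ t)) = fOstar is_ t)
  (c : nat) (hc : exists t, fOstar is_ t = c)
  (hdim : forall t, (fOstar is_ t <= c)%N ->
     has_dim (fun v : 'rV[K]_g => exists x : 'rV[K]_g,
                v = piproj is_ (rep (fOstar is_ t))
                      (Hcomp p js is_ (rep (fOstar is_ t)) l x))
             (fOstar is_ t)) :
  forall t : 'I_l, (fOstar is_ t <= c)%N -> wmaximal is_ t.
Proof.
have hp0 : (0 < p)%N := prime_gt0 hp.
suff H : forall a t, fOstar is_ t = a -> (a <= c)%N -> wmaximal is_ t.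
  by move=> t; exact: H.
elim/ltn_ind=> a IHa t ht hac.
case: (@eqP _ [seq val x | x <- is_ t] (iota 0 (fOstar is_ t))) => [//|hn].
have ha0 : (0 < a)%N.
  rewrite lt0n; apply/negP => /eqP a0; apply: hn.
  by move: ht; rewrite a0 /fOstar => /size0nil ->.
set tau := rep a.
have htau : fOstar is_ tau = a by rewrite /tau -ht hrep.
have IHt : forall t', (fOstar is_ t' < fOstar is_ tau)%N -> wmaximal is_ t'.
  move=> t' h'; rewrite htau in h'; apply: (IHa _ h') => //; lia.
have hd := hdim t; rewrite ht in hd; have {}hd := hd hac.
rewrite -/tau in hd.
have [i hil hi] := orbit hl tau t.
case: i hil hi => [|i] hil hi.
-
  have et : tau = t by rewrite -hi.
  rewrite -et in hn.
  set s := [seq x <- [seq val y | y <- is_ tau] | (x < a)%N].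
  have := dim_le (s := s) hd.
  have : (count (fun x => x < a)%N [seq val y | y <- is_ tau] <= a)%N.
    by rewrite -{2}htau /fOstar -(size_map val) count_size.
  move=> hcs hle; exfalso; apply: (nonmax_all his hn) => x hx.
  have hsupp : forall v : 'rV[K]_g, (exists x, v = piproj is_ tau (Hcomp p js is_ tau l x)) ->
      supp (fun n => n \in s) v.
    move=> v hv; case: hv => y ->; move=> j hj; rewrite mxE; case: ifP => // jin.
    apply: (chain1 hp0 hjs his hpart IHt y hl); rewrite /lt_ htau.
    apply/negP => hja; move: hj; rewrite mem_filter hja /= (mem_map val_inj) jin.
    by [].
  have := hle hsupp; rewrite size_filter => hge.
  have hall : all (fun x => x < a)%N [seq val y | y <- is_ tau].
    by rewrite all_count eqn_leq count_size size_map /= -/(fOstar is_ tau) htau hge.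
  rewrite htau; exact: (allP hall).
-
  exfalso.
  have hsupp : forall v : 'rV[K]_g, (exists x, v = piproj is_ tau (Hcomp p js is_ tau l x)) ->
      supp (fun n => n \in iota 0 a.-1) v.
    move=> v hv; case: hv => y ->.
    have h2 : supp (lt_ a.-1) (Hcomp p js is_ tau i.+2 y).
      change (Hcomp p js is_ tau i.+2 y) with (Hmap p js is_ tau i.+1 (Hcomp p js is_ tau i.+1 y)); rewrite /Hmap hi; have -> : (fOstar is_ tau <= fOstar is_ t)%N by rewrite ht htau.
      rewrite -ht; apply: C3 => //.
      by rewrite ht -htau; exact: (chain1 hp0 hjs his hpart IHt y (ltn0Sn i)).
    have := chainlater hp0 hjs his hpart IHt (l - i.+2) h2.
    have -> : (i.+2 + (l - i.+2) = l)%N by lia.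
    move=> h3; apply: supp_piproj => j hj; apply: h3; move: hj.
    by rewrite /lt_ mem_iota add0n.
  have := dim_le hd hsupp; rewrite size_iota; lia.
Qed.
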